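(* Let $p\colon G(J)\to D'(K)$ be a realizable puzzle, $J=(j_1,\dots,j_m)$, and write $p(\mathbf 1)=(\mathbf a_1\ \cdots\ \mathbf a_m)$ for $\mathbf 1=(1,\dots,1)$. For each $v\in[m]$ and each $2\le a\le j_v$, let $\mathbf h$ be the vertex of $G(J)$ with $h_v=a$ and $h_i=1$ for $i\ne v$; the subpuzzle on the edge $\{\mathbf 1,\mathbf h\}$ is realizable by a characteristic map over $\operatorname{wed}_vK$ whose projection at $v_2$ (corresponding to $\mathbf 1$) is $p(\mathbf 1)$, and we fix for it a standard form, i.e. a representative whose columns labeled $1,\dots,v-1,v_1,v_2,v+1,\dots,m$ are $(\mathbf a_i; e^{a}_{v,i})$ for $i\ne v$, $(\mathbf a_v;-1)$ and $(0;1)$, with $e^a_{v,i}\in R$. Define the block matrices $A_i=(\mathbf a_i\ 0\ \cdots\ 0)$ of size $n\times j_i$; $S_i$ of size $(j_i-1)\times j_i$ whose row $t$ ($1\le t\le j_i-1$) has $-1$ in column $1$, $1$ in column $t+1$ and $0$ elsewhere; and $E_{k,i}$ ($k\ne i$) of size $(j_k-1)\times j_i$ whose first column is $(e^2_{k,i},e^3_{k,i},\dots,e^{j_k}_{k,i})^T$ and other columns are zero. Then the matrix $$\Lambda=\begin{pmatrix} A_1&A_2&\cdots&A_m\\ S_1&E_{1,2}&\cdots&E_{1,m}\\ E_{2,1}&S_2&\cdots&E_{2,m}\\ \vdots&&\ddots&\vdots\\ E_{m,1}&\cdots&E_{m,m-1}&S_m\end{pmatrix},$$ with columns labeled $1_1,\dots,1_{j_1},2_1,\dots,2_{j_2},\dots,m_1,\dots,m_{j_m}$,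 is an $R$-characteristic map over $K(J)$ realizing $p$. In particular, a realizable puzzle is uniquely determined by $p(\mathbf 1)$ and the values $p(\boldsymbol\alpha)$ at the vertices $\boldsymbol\alpha$ adjacent to $\mathbf 1$.
   Context: Let $R\in\{\mathbb Z,\mathbb Z_2\}$; an $R$-basis of $R^n$ is a $\mathbb Z$-basis of $\mathbb Z^n$ ($R=\mathbb Z$) or a basis of $\mathbb Z_2^n$ ($R=\mathbb Z_2$). $K$ is an $(n-1)$-dimensional star-shaped simplicial sphere on $[m]$. An $R$-characteristic map over a complex with $(N-1)$-dimensional facets is a map from its vertices to $R^N$ sending each $(N-1)$-face to an $R$-basis, written as the matrix of its columns; D-J equivalence is equality up to left multiplication by $GL_N(R)$. For a face $\sigma$, $\operatorname{proj}_\sigma\lambda$ is the characteristic map on $\operatorname{link}\sigma$ given by $w\mapsto[\lambda(w)]\in R^N/\langle\lambda(u):u\in\sigma\rangle$, up to D-J equivalence. For $J=(j_1,\dots,j_m)\in\mathbb Z_{>0}^m$, $K(J)$ is the complex on vertices $\{i_k:1\le i\le m,1\le k\le j_i\}$ whose minimal non-faces are the sets $\bigcup_{i\in\tau}\{i_1,\dots,i_{j_i}\}$ for $\tau$ a minimal non-face of $K$; $\operatorname{wed}_vK=K(J)$ with $j_v=2$, $j_i=1$ otherwise (vertices $v_1,v_2$; $i_1$ written $i$). $I(J)=\{\boldsymbol\alpha\in\mathbb Z^m:1\le\alpha_i\le j_i\}$. For $\boldsymbol\alpha\in I(J)$, $\sigma(\boldsymbol\alpha)$ is the set of all vertices of $K(J)$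 except $1_{\alpha_1},\dots,m_{\alpha_m}$; it is a face, and $\operatorname{link}_{K(J)}\sigma(\boldsymbol\alpha)$ is identified with $K$ via $i_{\alpha_i}\mapsto i$. The pre-diagram $D'(K)$ is the edge-colored multigraph (loops allowed) whose vertices are D-J classes of $R$-characteristic maps over $K$, with an edge colored $v$ between $\lambda_1,\lambda_2$ iff some $R$-characteristic map $\Lambda$ over $\operatorname{wed}_vK$ has $\operatorname{proj}_{v_1}\Lambda=\lambda_1$, $\operatorname{proj}_{v_2}\Lambda=\lambda_2$ (via the identifications above). $G(J)$ is the $1$-skeleton of $\Delta^{j_1-1}\times\cdots\times\Delta^{j_m-1}$, with vertex set $I(J)$, two vertices adjacent iff they differ in exactly one coordinate $v$, such an edge being colored $v$. A puzzle of $(K,J)$ is a color-preserving graph homomorphism $p:G(J)\to D'(K)$. For an $R$-characteristic map $\Lambda$ over $K(J)$, the map $\boldsymbol\alpha\mapsto\operatorname{proj}_{\sigma(\boldsymbol\alpha)}\Lambda$ is a puzzle; puzzles of this form are called realizable (realized by $\Lambda$). For nonempty $S_i\subseteq[j_i]$, the restriction of $p$ to the induced subgraph on $\prod S_i$, identified with $G(J')$ ($j'_i=|S_i|$) via order-preserving bijections, is a subpuzzle, itself a puzzle of $(K,J')$. *)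

(* Defs.v *)
From HB Require Import structures.
From mathcomp Require Import all_boot all_order all_algebra.
Set Implicit Arguments. Unset Strict Implicit. Unset Printing Implicit Defensive.
Import Order.TTheory GRing.Theory Num.Theory.
Local Open Scope ring_scope.

Inductive coeff := CoefZ | CoefZ2.
Definition coefR (c : coeff) : comUnitRingType :=
  match c with CoefZ => int | CoefZ2 => 'Z_2 end.

Definition simplicial_complex (m : nat) (K : {set {set 'I_m}}) : Prop :=
  set0 \in K /\ (forall s t : {set 'I_m}, s \in K -> t \subset s -> t \in K)
  /\ (forall i, [set i] \in K).

Definition cone (F : realFieldType) (m n : nat) (w : 'I_m -> 'rV[F]_n)
  (s : {set 'I_m}) (x : 'rV[F]_n) : Prop :=
  exists c : 'I_m -> F, (forall i, 0 <= c i) /\ (forall i, i \notin s -> c i = 0)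
    /\ x = \sum_i c i *: w i.

Definition complete_fan (F : realFieldType) (m n : nat) (K : {set {set 'I_m}})
  (w : 'I_m -> 'rV[F]_n) : Prop :=
  (forall s, s \in K -> forall c : 'I_m -> F, (forall i, i \notin s -> c i = 0) ->
      \sum_i c i *: w i = 0 -> forall i, c i = 0)
  /\ (forall s t, s \in K -> t \in K -> forall x,
        cone w s x -> cone w t x -> cone w (s :&: t) x)
  /\ (forall x, exists2 s, s \in K & cone w s x).

Definition star_shaped_sphere (m n : nat) (K : {set {set 'I_m}}) : Prop :=
  simplicial_complex K
  /\ (exists2 s, s \in K & #|s| = n) /\ (forall s, s \in K -> #|s| <= n)%N
  /\ exists (F : realFieldType) (w : 'I_m -> 'rV[F]_n), complete_fan K w.

Definition min_nonface (V : finType) (L : {set {set V}}) (t : {set V}) : bool :=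
  (t \notin L) && [forall i in t, t :\ i \in L].

Definition link (V : finType) (L : {set {set V}}) (s : {set V}) : {set {set V}} :=
  [set t in L | [disjoint t & s] && (t :|: s \in L)].

Section CharMaps.
Variable R : comUnitRingType.

Definition is_basis (V : finType) (N : nat) (lam : V -> 'cV[R]_N) (s : {set V}) : Prop :=
  (forall x : 'cV[R]_N, exists c : V -> R, x = \sum_(u in s) c u *: lam u)
  /\ (forall c : V -> R, \sum_(u in s) c u *: lam u = 0 -> forall u, u \in s -> c u = 0).

Definition charmap (V : finType) (L : {set {set V}}) (N : nat) (lam : V -> 'cV[R]_N) : Prop :=
  forall s, s \in L -> #|s| = N -> is_basis lam s.

Definition DJ_equiv (V : finType) (N : nat) (lam mu : V -> 'cV[R]_N) : Prop :=
  exists2 g : 'M[R]_N, g \in unitmx & forall v, mu v = g *m lam v.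

(* mu (a map on the vertices W of the link, identified with vertices of the
   ambient complex through f) represents the D-J class of proj_s lam :
   mu w = P (lam (f w)), where P : R^N -> R^N' is surjective with kernel the
   span of lam(s), i.e. P realizes an isomorphism R^N / <lam(u) : u in s> ~ R^N'. *)
Definition is_proj (V W : finType) (N N' : nat) (s : {set V}) (lam : V -> 'cV[R]_N)
  (f : W -> V) (mu : W -> 'cV[R]_N') : Prop :=
  exists P : 'M[R]_(N', N),
    (forall y : 'cV[R]_N', exists x, P *m x = y)
    /\ (forall x : 'cV[R]_N, P *m x = 0 <-> exists c : V -> R, x = \sum_(u in s) c u *: lam u)
    /\ (forall w, mu w = P *m lam (f w)).
End CharMaps.
Arguments charmap {R V} L N lam.

(* J = (j_1,...,j_m) is encoded by d with j_i = (d i).+1; the copy i_k of vertex i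
   (1 <= k <= j_i) is Tagged i (k-1). *)
Definition KJV (m : nat) (d : 'I_m -> nat) : finType := {i : 'I_m & 'I_(d i).+1}.

Definition block (m : nat) (d : 'I_m -> nat) (t : {set 'I_m}) : {set KJV d} :=
  [set x : KJV d | tag x \in t].

Definition KJ (m : nat) (K : {set {set 'I_m}}) (d : 'I_m -> nat) : {set {set KJV d}} :=
  [set S : {set KJV d} | [forall t : {set 'I_m}, min_nonface K t ==> ~~ (block d t \subset S)]].

(* wed_v K : j_v = 2, j_i = 1 otherwise *)
Definition dwed (m : nat) (v : 'I_m) : 'I_m -> nat := fun i => nat_of_bool (i == v).

(* vertices of G(J) : I(J) = product of [j_i] (0-indexed) *)
Definition IJ (m : nat) (d : 'I_m -> nat) := forall i : 'I_m, 'I_(d i).+1.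

Definition oneJ (m : nat) (d : 'I_m -> nat) : IJ d := fun i => ord0.

(* the vertex h with h_v = b+1 (paper: h_v = b+1 in 1-indexed terms, here 0-indexed b) *)
Definition hJ (m : nat) (d : 'I_m -> nat) (v : 'I_m) (b : nat) : IJ d :=
  fun i => if i == v then inord b else ord0.

Definition sigmaJ (m : nat) (d : 'I_m -> nat) (al : IJ d) : {set KJV d} :=
  [set x : KJV d | x != Tagged (fun i => 'I_(d i).+1) (al (tag x))].

(* identification of link sigma(alpha) with K : i |-> i_{alpha_i} *)
Definition idJ (m : nat) (d : 'I_m -> nat) (al : IJ d) (i : 'I_m) : KJV d :=
  Tagged (fun i => 'I_(d i).+1) (al i).

(* A puzzle is given by representatives p alpha : 'I_m -> 'cV_n of the D-J classes. *)
Definition NJ (m n : nat) (d : 'I_m -> nat) : nat := (n + \sum_(i < m) d i)%N.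

Definition realized_by (R : comUnitRingType) (m n : nat) (d : 'I_m -> nat)
  (p : IJ d -> 'I_m -> 'cV[R]_n) (Lam : KJV d -> 'cV[R]_(NJ n d)) : Prop :=
  forall al : IJ d, is_proj (sigmaJ al) Lam (idJ al) (p al).

Definition realizable (R : comUnitRingType) (m n : nat) (K : {set {set 'I_m}})
  (d : 'I_m -> nat) (p : IJ d -> 'I_m -> 'cV[R]_n) : Prop :=
  exists Lam : KJV d -> 'cV[R]_(NJ n d), charmap (KJ K d) (NJ n d) Lam /\ realized_by p Lam.

Definition std_form (R : comUnitRingType) (m n : nat) (a : 'I_m -> 'cV[R]_n) (v : 'I_m)
  (ev : 'I_m -> R) (x : KJV (dwed v)) : 'cV[R]_(n + 1) :=
  if tag x == v then
    (if val (tagged x) == 0%N then col_mx (a v) (-1)%:M else col_mx 0 1%:M)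
  else col_mx (a (tag x)) (ev (tag x))%:M.

(* lower rows are indexed by (k, t), t : 'I_(d k) ; row (k,t) is row t+1 of block k *)
Definition lowrow (m : nat) (d : 'I_m -> nat) : finType := {k : 'I_m & 'I_(d k)}.

Definition Lambda_entry (R : comUnitRingType) (m : nat) (d : 'I_m -> nat)
  (e : 'I_m -> nat -> 'I_m -> R) (x : KJV d) (r : lowrow d) : R :=
  let i := tag x in let c := val (tagged x) in
  let k := tag r in let t := val (tagged r) in
  if k == i then (if c == 0%N then -1 else if c == t.+1 then 1 else 0)
  else (if c == 0%N then e k t.+1 i else 0).

Lemma card_lowrow (m : nat) (d : 'I_m -> nat) : #|lowrow d| = \sum_(i < m) d i.
Proof.
rewrite /lowrow card_tagged sumnE big_map big_enum /=.
by apply: eq_bigr => i _; rewrite card_ord.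
Qed.

Definition Lambda (R : comUnitRingType) (m n : nat) (d : 'I_m -> nat)
  (a : 'I_m -> 'cV[R]_n) (e : 'I_m -> nat -> 'I_m -> R) (x : KJV d) : 'cV[R]_(NJ n d) :=
  col_mx (if val (tagged x) == 0%N then a (tag x) else 0)
    (castmx (card_lowrow d, erefl 1%N)
       (\col_(r < #|lowrow d|) Lambda_entry e x (enum_val r))).

(* Main.v *)
Require Import Defs.
From HB Require Import structures.
From mathcomp Require Import all_boot all_order all_algebra.
From mathcomp Require Import zify ring lra.
From Stdlib Require Import Classical.
Set Implicit Arguments. Unset Strict Implicit. Unset Printing Implicit Defensive.
Import Order.TTheory GRing.Theory Num.Theory.
Local Open Scope ring_scope.


Section LinAlg.
Variable R : comUnitRingType.

Lemma col_delta_sum N (x : 'cV[R]_N) : x = \sum_r x r 0 *: delta_mx r 0.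
Proof.
rewrite {1}(matrix_sum_delta x); apply: eq_bigr => r _.
by rewrite big_ord1.
Qed.

Lemma sum_pred1 (V : finType) N (F : V -> 'cV[R]_N) v :
  \sum_u (u == v)%:R *: F u = F v.
Proof.
rewrite (bigD1 v) //= eqxx scale1r big1 ?addr0 // => u /negPf ->.
by rewrite scale0r.
Qed.

Lemma rel_transfer (V : finType) N N' (X : V -> 'cV[R]_N) (Y : V -> 'cV[R]_N') :
  (forall x, exists c : V -> R, x = \sum_u c u *: X u) ->
  (forall c : V -> R, \sum_u c u *: X u = 0 -> \sum_u c u *: Y u = 0) ->
  exists g : 'M[R]_(N', N), forall u, Y u = g *m X u.
Proof.
move=> span rel.
have [C HC] := fin_all_exists (fun r : 'I_N => span (delta_mx r 0)).
exists (\sum_r (\sum_u C r u *: Y u) *m delta_mx 0 r) => v.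
pose coef u := \sum_r X v r 0 * C r u.
have e1 : X v = \sum_u coef u *: X u.
  rewrite {1}(col_delta_sum (X v)).
  under eq_bigr => r _ do rewrite HC scaler_sumr.
  rewrite exchange_big; apply: eq_bigr => u _; rewrite scaler_suml.
  by apply: eq_bigr => r _; rewrite scalerA.
have e2 : \sum_u ((u == v)%:R - coef u) *: X u = 0.
  under eq_bigr => u _ do rewrite scalerBl.
  by rewrite sumrB sum_pred1 -e1 subrr.
have := rel _ e2.
under eq_bigr => u _ do rewrite scalerBl.
rewrite sumrB sum_pred1 => /eqP; rewrite subr_eq0 => /eqP ->.
rewrite mulmx_suml.
match goal with |- _ = ?RR => have -> : RR = \sum_r X v r 0 *: \sum_u C r u *: Y u end.
  apply: eq_bigr => r _; rewrite -mulmxA -rowE (mx11_scalar (row r (X v))) mxE mul_mx_scalar; done.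
under [RHS]eq_bigr => r _ do rewrite scaler_sumr.
rewrite exchange_big; apply: eq_bigr => u _; rewrite scaler_suml.
by apply: eq_bigr => r _; rewrite scalerA.
Qed.

Lemma mx_eq1 N (A : 'M[R]_N) : (forall x : 'cV_N, A *m x = x) -> A = 1%:M.
Proof.
move=> H; apply/matrixP => i j.
have := H (delta_mx j 0); rewrite -colE => /matrixP/(_ i 0).
rewrite !mxE => ->; by rewrite eqxx andbT.
Qed.

Lemma rel_unit (V : finType) N (X Y : V -> 'cV[R]_N) :
  (forall x, exists c : V -> R, x = \sum_u c u *: X u) ->
  (forall x, exists c : V -> R, x = \sum_u c u *: Y u) ->
  (forall c : V -> R, \sum_u c u *: X u = 0 <-> \sum_u c u *: Y u = 0) ->
  exists2 g : 'M[R]_N, g \in unitmx & forall u, Y u = g *m X u.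
Proof.
move=> sX sY rel.
have [g Hg] := rel_transfer sX (fun c => proj1 (rel c)).
have [h Hh] := rel_transfer sY (fun c => proj2 (rel c)).
have hg : h *m g = 1%:M.
  apply: mx_eq1 => x; have [c ->] := sX x.
  rewrite !mulmx_sumr; apply: eq_bigr => u _.
  by rewrite -!scalemxAr -mulmxA -Hg -Hh.
by exists g => //; case: (mulmx1_unit hg).
Qed.

Lemma mul_sum_col n N (P : 'M[R]_(n, N)) x : P *m x = \sum_j x j 0 *: col j P.
Proof.
rewrite {1}(col_delta_sum x) mulmx_sumr; apply: eq_bigr => j _.
by rewrite -scalemxAr colE.
Qed.

Lemma proj_equiv n N (P P' : 'M[R]_(n, N)) :
  (forall y : 'cV[R]_n, exists x, P *m x = y) -> (forall y : 'cV[R]_n, exists x, P' *m x = y) ->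
  (forall x : 'cV[R]_N, P *m x = 0 <-> P' *m x = 0) ->
  exists2 g : 'M[R]_n, g \in unitmx & P' = g *m P.
Proof.
move=> sP sP' ker.
have sp (Q : 'M[R]_(n, N)) : (forall y : 'cV[R]_n, exists x, Q *m x = y) ->
    forall y, exists c : 'I_N -> R, y = \sum_j c j *: col j Q.
  by move=> sQ y; have [x <-] := sQ y; exists (fun j => x j 0); apply: mul_sum_col.
have rl (Q : 'M[R]_(n, N)) (c : 'I_N -> R) :
    \sum_j c j *: col j Q = Q *m (\col_j c j : 'cV_N).
  by rewrite mul_sum_col; apply: eq_bigr => j _; rewrite mxE.
have [g gu Hg] := @rel_unit _ _ (fun j => col j P) (fun j => col j P') (sp _ sP) (sp _ sP')
  (fun c => ltac:(rewrite !rl; apply: ker)).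
exists g => //; apply/matrixP => i j.
have := Hg j; rewrite !colE mulmxA -colE => /matrixP/(_ i 0).
by rewrite -colE !mxE.
Qed.

Lemma basis_transfer (V : finType) N (lam : V -> 'cV[R]_N) (g : 'M[R]_N) s :
  g \in unitmx -> is_basis lam s -> is_basis (fun u => g *m lam u) s.
Proof.
move=> gu [sp ind]; split.
  move=> x; have [c Hc] := sp (invmx g *m x); exists c.
  rewrite -(mulKVmx gu x) Hc mulmx_sumr; apply: eq_bigr => u _.
  by rewrite scalemxAr.
move=> c Hc; apply: ind.
have : invmx g *m (\sum_(u in s) c u *: (g *m lam u)) = 0 by rewrite Hc mulmx0.
rewrite mulmx_sumr => H; rewrite -[RHS]H; apply: eq_bigr => u _.
by rewrite -scalemxAr mulKmx.
Qed.

Lemma proj_transfer (V W : finType) N N' (s : {set V}) (lam : V -> 'cV[R]_N) (f : W -> V)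
  (mu : W -> 'cV[R]_N') (g : 'M[R]_N) :
  g \in unitmx -> is_proj s lam f mu -> is_proj s (fun u => g *m lam u) f mu.
Proof.
move=> gu [P [sP [kP eP]]]; exists (P *m invmx g); split; [|split].
- move=> y; have [x <-] := sP y; exists (g *m x).
  by rewrite -mulmxA (mulmxA (invmx g)) mulVmx // mul1mx.
- move=> x; rewrite -mulmxA; split.
    move/kP => [c Hc]; exists c.
    rewrite -(mulKVmx gu x) Hc mulmx_sumr; apply: eq_bigr => u _.
    by rewrite scalemxAr.
  move=> [c Hc]; apply/kP; exists c.
  rewrite Hc mulmx_sumr; apply: eq_bigr => u _.
  by rewrite -scalemxAr mulKmx.
- by move=> w; rewrite eP -mulmxA mulKmx.
Qed.

End LinAlg.


Section Comb.
Variables (m : nat) (d : 'I_m -> nat).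

Lemma sumKJV (V : nmodType) (F : KJV d -> V) :
  \sum_u F u = \sum_i \sum_(j : 'I_(d i).+1) F (Tagged (fun i => 'I_(d i).+1) j).
Proof.
rewrite [RHS](sig_big_dep (fun _ => true) (fun _ _ => true) (fun i (j : 'I_(d i).+1) => F (Tagged (fun i => 'I_(d i).+1) j))) /=.
by apply: eq_bigr => -[i j].
Qed.

Definition Fset (al : IJ d) (tau : {set 'I_m}) : {set KJV d} :=
  [set u : KJV d | (u != idJ al (tag u)) || (tag u \in tau)].

Lemma sigma_idJ (al : IJ d) u : (u \in sigmaJ al) = (u != idJ al (tag u)).
Proof. by rewrite inE. Qed.

Lemma idJ_notin (al : IJ d) k : idJ al k \notin sigmaJ al.
Proof. by rewrite sigma_idJ /= eqxx. Qed.

Lemma idJ_inj (al : IJ d) : injective (idJ al).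
Proof. by move=> i j /(congr1 tag). Qed.

Lemma sigma_Fset al (tau : {set 'I_m}) : sigmaJ al \subset Fset al tau.
Proof. by apply/subsetP => u; rewrite sigma_idJ inE => ->. Qed.

Lemma idJ_Fset al (tau : {set 'I_m}) k : k \in tau -> idJ al k \in Fset al tau.
Proof. by move=> kt; rewrite inE /= kt orbT. Qed.

Lemma Fset_KJ (K : {set {set 'I_m}}) al (tau : {set 'I_m}) :
  simplicial_complex K -> tau \in K -> Fset al tau \in KJ K d.
Proof.
move=> [_ [cl _]] tK; rewrite inE; apply/forallP => t; apply/implyP.
case/andP => tn _; apply/negP => /subsetP sub.
move/negP: tn; apply; apply: (cl tau) => //; apply/subsetP => i it.
have : idJ al i \in block d t by rewrite inE.
by move/sub; rewrite inE /= eqxx.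
Qed.

Lemma card_KJV : #|KJV d| = (\sum_i d i + m)%N.
Proof.
rewrite /KJV card_tagged sumnE big_map big_enum /=.
have e : (\sum_(i < m) 1)%N = m by rewrite sum1_card card_ord.
rewrite -[X in (_ + X)%N]e -big_split /=.
by apply: eq_bigr => i _; rewrite card_ord addn1.
Qed.

Lemma card_Fset al (tau : {set 'I_m}) n : #|tau| = n -> #|Fset al tau| = NJ n d.
Proof.
move=> ct.
have eC : ~: Fset al tau = idJ al @: ~: tau.
  apply/setP => u; rewrite !inE negb_or negbK.
  apply/andP/imsetP => [[/eqP eu nt]|[i ni ->]].
    by exists (tag u); rewrite ?inE // -eu.
  by rewrite /= eqxx; rewrite inE in ni.
have h1 : (#|Fset al tau| + #|~: tau|)%N = (\sum_i d i + m)%N.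
  by rewrite -card_KJV -(cardsC (Fset al tau)) eC card_imset //; exact: idJ_inj.
have h2 : (#|tau| + #|~: tau|)%N = m by rewrite cardsC card_ord.
rewrite /NJ -ct (_ : (\sum_(i < m) d i)%N = (\sum_i d i)%N) //; move: h1 h2; generalize #|Fset al tau| #|~: tau| #|tau| (\sum_i d i)%N.
move=> a b c e; lia.
Qed.

End Comb.


Section Geo.
Variables (F : realFieldType) (m n : nat) (w : 'I_m -> 'rV[F]_n).

Definition Mof (s : {set 'I_m}) : 'M[F]_(#|s|, n) := \matrix_(i < #|s|) w (enum_val i).

Definition indep (s : {set 'I_m}) := forall c : 'I_m -> F, (forall i, i \notin s -> c i = 0) ->
      \sum_i c i *: w i = 0 -> forall i, c i = 0.

Lemma sum_supp (s : {set 'I_m}) (c : 'I_m -> F) : (forall i, i \notin s -> c i = 0) ->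
  \sum_i c i *: w i = \sum_(j < #|s|) c (enum_val j) *: row j (Mof s).
Proof.
move=> cs; rewrite (bigID (fun i => i \in s)) /= [X in _ + X]big1 ?addr0.
  by rewrite big_enum_val; apply: eq_bigr => j _; rewrite rowK.
by move=> i /cs ->; rewrite scale0r.
Qed.

Lemma row_free_Mof s : indep s -> row_free (Mof s).
Proof.
move=> ind; rewrite -kermx_eq0; apply/eqP/row_matrixP => r; rewrite row0.
set u := row r (kermx (Mof s)).
have u0 : u *m Mof s = 0 by rewrite /u -row_mul mulmx_ker row0.
pose c i := \sum_(j < #|s|) (enum_val j == i)%:R * u 0 j.
have ce j : c (enum_val j) = u 0 j.
  rewrite /c (bigD1 j) //= eqxx mul1r big1 ?addr0 // => k kj.
  by rewrite (inj_eq enum_val_inj) (negPf kj) mul0r.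
have cs : forall i, i \notin s -> c i = 0.
  move=> i ni; rewrite /c big1 // => j _.
  by case: eqP => [ej|]; rewrite ?mul0r //; move: ni; rewrite -ej enum_valP.
have H : forall i, c i = 0.
  apply: (ind _ cs); rewrite (sum_supp cs) -[RHS]u0 mulmx_sum_row.
  by apply: eq_bigr => k _; rewrite ce.
by apply/rowP => j; rewrite [RHS]mxE -ce H.
Qed.

Lemma exists_out (s t : {set 'I_m}) : indep t -> #|t| = n -> (#|s| < n)%N ->
  exists y : 'rV[F]_n, forall c : 'I_m -> F, (forall i, i \notin s -> c i = 0) ->
     y <> \sum_i c i *: w i.
Proof.
move=> it ct cs.
have : ~~ (Mof t <= Mof s)%MS.
  apply/negP => /mxrankS; have := row_free_Mof it; rewrite /row_free => /eqP ->.
  have := rank_leq_row (Mof s); rewrite ct; lia.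
case/row_subPn => j nj; exists (row j (Mof t)) => c sc ey.
move/negP: nj; apply; rewrite ey (sum_supp sc).
have -> : \sum_(j0 < #|s|) c (enum_val j0) *: row j0 (Mof s) = (\row_k c (enum_val k)) *m Mof s.
  by rewrite mulmx_sum_row; apply: eq_bigr => k _; rewrite mxE.
by rewrite submxMl.
Qed.


Lemma bad_delta (t : {set 'I_m}) (x0 y : 'rV[F]_n) : indep t -> ~ cone w t x0 ->
  exists2 dl : F, 0 < dl & forall l, 0 < l -> l < dl -> ~ cone w t (x0 + l *: y).
Proof.
move=> it nc; apply: NNPP => Hn.
have H : forall dl, 0 < dl -> exists l, [/\ 0 < l, l < dl & cone w t (x0 + l *: y)].
  move=> dl dl0; apply: NNPP => H2; apply: Hn; exists dl => // l l0 ldl cl.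
  by apply: H2; exists l.
have [l1 [l10 l11 [c1 [c1p [c1s e1]]]]] := H 1 ltr01.
have [l2 [l20 l21 [c2 [c2p [c2s e2]]]]] := H l1 l10.
have l12 : l1 - l2 != 0 by rewrite subr_eq0 gt_eqF.
pose dd i := (l1 - l2)^-1 * (c1 i - c2 i).
pose c0 i := c2 i - l2 * dd i.
have ey : y = \sum_i dd i *: w i.
  have e3 : (l1 - l2) *: y = \sum_i (c1 i - c2 i) *: w i.
    under eq_bigr => i _ do rewrite scalerBl.
    by rewrite sumrB -e1 -e2 scalerBl opprD addrACA subrr add0r.
  under eq_bigr => i _ do rewrite /dd -scalerA.
  by rewrite -scaler_sumr -e3 scalerA mulVf // scale1r.
have ex0 : x0 = \sum_i c0 i *: w i.
  under eq_bigr => i _ do rewrite /c0 scalerBl -scalerA.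
  by rewrite sumrB -scaler_sumr -ey -e2 addrK.
have dds : forall i, i \notin t -> dd i = 0.
  by move=> i nt; rewrite /dd c1s // c2s // subrr mulr0.
have c0s : forall i, i \notin t -> c0 i = 0.
  by move=> i nt; rewrite /c0 dds // c2s // mulr0 subrr.
have [i ci] : exists i, c0 i < 0.
  apply: NNPP => Hn2; apply: nc; exists c0; split => // j.
  by rewrite leNgt; apply/negP => cj; apply: Hn2; exists j.
have ddp : 0 < `|dd i| + 1 by apply: ltr_wpDl; rewrite ?normr_ge0.
pose dl := - c0 i / (`|dd i| + 1).
have dl0 : 0 < dl by apply: divr_gt0 => //; rewrite oppr_gt0.
have [l [l0 ldl [c [cp [cs e]]]]] := H dl dl0.
have cc : forall j, c j - (c0 j + l * dd j) = 0.
  apply: it => [j nj|]; first by rewrite cs // c0s // dds // mulr0 addr0 subrr.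
  under eq_bigr => j _ do rewrite scalerBl scalerDl -scalerA.
  by rewrite sumrB big_split /= -scaler_sumr -ey -ex0 -e subrr.
have := cp i; move/eqP: (cc i); rewrite subr_eq0 => /eqP ->.
have h1 : l * dd i <= l * `|dd i| by apply: ler_wpM2l; [exact: ltW | exact: ler_norm].
have h2 : l * (`|dd i| + 1) < dl * (`|dd i| + 1) by rewrite ltr_pM2r.
have h3 : dl * (`|dd i| + 1) = - c0 i by rewrite /dl divfK // gt_eqF.
rewrite mulrDr mulr1 h3 in h2.
lra.
Qed.

Lemma minpos (T : finType) (dl : T -> F) : (forall t, 0 < dl t) ->
  exists2 l, 0 < l & forall t, l < dl t.
Proof.
move=> dp.
suff : forall s : seq T, exists2 l, 0 < l & forall t, t \in s -> l < dl t.
  by case/(_ (enum T)) => l l0 H; exists l => // t; apply: H; rewrite mem_enum.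
elim=> [|a s [l l0 H]]; first by exists 1.
have da := dp a.
case: (ltP l (dl a)) => la.
  exists (l / 2); first by lra.
  move=> t; rewrite inE => /orP[/eqP ->|/H]; lra.
exists (dl a / 2); first by lra.
move=> t; rewrite inE => /orP[/eqP ->|/H]; lra.
Qed.

Lemma extend (K : {set {set 'I_m}}) s :
  (forall s, s \in K -> indep s) ->
  (forall s t, s \in K -> t \in K -> forall x, cone w s x -> cone w t x -> cone w (s :&: t) x) ->
  (forall x, exists2 s, s \in K & cone w s x) ->
  (exists2 t, t \in K & #|t| = n) ->
  s \in K -> (#|s| < n)%N -> exists2 t, t \in K & s \proper t.
Proof.
move=> ind inter cover [t0 t0K ct0] sK cs.
have [y hy] := exists_out (ind t0 t0K) ct0 cs.
pose x0 := \sum_i (i \in s)%:R *: w i.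
have ss : forall i, i \notin s -> (i \in s)%:R = 0 :> F by move=> i /negPf ->.
have cx0 : cone w s x0 by exists (fun i => (i \in s)%:R); split => // i; apply: ler0n.
have [dl Hdl] := fin_all_exists (P := fun t dl => 0 < dl /\ (t \in K -> ~ cone w t x0 ->
    forall l, 0 < l -> l < dl -> ~ cone w t (x0 + l *: y))) (fun t =>
  ltac:(case: (classic ((t \in K) /\ ~ cone w t x0)) => [[tK ct]|nt];
  [have [dl dl0 Hd] := bad_delta y (ind t tK) ct; exists dl; split => //
  | exists 1; split => // tK ct; exfalso; exact: nt])).
have [l0 l00 l0dl] := minpos (fun t => proj1 (Hdl t)).
have [t tK ct] := cover (x0 + l0 *: y).
have ctx : cone w t x0.
  by apply: NNPP => nc; exact: (proj2 (Hdl t) tK nc l0 l00 (l0dl t) ct).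
exists t => //.
have st : s \subset t.
  have [c [cp [cs' e]]] := inter s t sK tK x0 cx0 ctx.
  have ceq : forall i, (i \in s)%:R - c i = 0.
    apply: (ind s sK) => [i ni|]; first by rewrite ss // cs' ?subrr // inE negb_and ni.
    under eq_bigr => i _ do rewrite scalerBl.
    by rewrite sumrB -e subrr.
  apply/subsetP => i si; have := ceq i; rewrite si.
  case: (boolP (i \in s :&: t)); first by rewrite inE => /andP[].
  by move/cs' => ->; rewrite subr0 => /eqP; rewrite oner_eq0.
rewrite properEneq st andbT; apply/eqP => est; subst t.
case: ct => c [cp [cs' e]].
apply: (hy (fun i => l0^-1 * (c i - (i \in s)%:R))).
  by move=> i ni; rewrite cs' // ss // subrr mulr0.
under eq_bigr => i _ do rewrite -scalerA scalerBl.
by rewrite -scaler_sumr sumrB -e addrAC subrr add0r scalerA mulVf ?scale1r // gt_eqF.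
Qed.

End Geo.

Lemma purity (m n : nat) (K : {set {set 'I_m}}) : star_shaped_sphere n K ->
  forall k : 'I_m, exists2 tau, tau \in K & (k \in tau) && (#|tau| == n).
Proof.
move=> [sc [[t0 t0K ct0] [le [F [w [ind [inter cover]]]]]]] k.
have k0 : ([set k] \in K) && (k \in [set k]) by rewrite set11 andbT; apply: (proj2 (proj2 sc)).
case: (@arg_maxnP _ [set k] (fun s => (s \in K) && (k \in s)) (fun s => #|s|) k0).
move=> s /andP[sK ks] smax.
exists s => //; rewrite ks /= eqn_leq le //=.
rewrite leqNgt; apply/negP => lt.
have [t tK st] := @extend F m n w K s ind inter cover (ex_intro2 _ _ t0 t0K ct0) sK lt.
have h : (#|t| <= #|s|)%N by apply: smax; rewrite tK /= (subsetP (proper_sub st)).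
by have := proper_card st; rewrite ltnNge h.
Qed.


Section Main.
Variables (R : comUnitRingType) (m n : nat) (K : {set {set 'I_m}}) (d : 'I_m -> nat).
Hypothesis scK : simplicial_complex K.
Hypothesis pureK : forall k, exists2 tau, tau \in K & (k \in tau) && (#|tau| == n).
Hypothesis facet0 : exists2 t, t \in K & #|t| = n.
Hypothesis dom : forall (a : R) (x : 'cV[R]_n), a *: x = 0 -> x != 0 -> a = 0.

Local Notation V := (KJV d).
Local Notation N := (NJ n d).

Lemma in_span N' (lam : V -> 'cV[R]_N') (s : {set V}) u : u \in s ->
  exists c : V -> R, lam u = \sum_(v in s) c v *: lam v.
Proof.
move=> us; exists (fun v => (v == u)%:R).
rewrite (bigD1 u) //= eqxx scale1r big1 ?addr0 // => v /andP[_ /negPf ->].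
by rewrite scale0r.
Qed.

Lemma proj_sum (al : IJ d) N' (lam : V -> 'cV[R]_N') (P : 'M[R]_(n, N')) (mu : 'I_m -> 'cV[R]_n) :
  (forall x, P *m x = 0 <-> exists c : V -> R, x = \sum_(u in sigmaJ al) c u *: lam u) ->
  (forall w, mu w = P *m lam (idJ al w)) ->
  forall c : V -> R, P *m (\sum_u c u *: lam u) = \sum_w c (idJ al w) *: mu w.
Proof.
move=> kP eP c; rewrite mulmx_sumr sumKJV; apply: eq_bigr => i _.
rewrite (bigD1 (al i)) //= big1 ?addr0.
  by rewrite -scalemxAr eP.
move=> j nj; rewrite -scalemxAr.
have -> : P *m lam (Tagged (fun i0 : 'I_m => 'I_(d i0).+1) j) = 0 by apply/kP; apply: in_span; rewrite inE /= eq_Tagged /=; exact: nj.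
by rewrite scaler0.
Qed.

Lemma span_lam (lam : V -> 'cV[R]_N) : charmap (KJ K d) N lam ->
  forall x, exists c : V -> R, x = \sum_u c u *: lam u.
Proof.
move=> cm x; have [t tK ct] := facet0.
have [sp _] := cm _ (Fset_KJ (oneJ d) scK tK) (card_Fset _ ct).
have [c ->] := sp x; exists (fun u => if u \in Fset (oneJ d) t then c u else 0).
rewrite [RHS](bigID (fun u => u \in Fset (oneJ d) t)) /= [X in _ = _ + X]big1 ?addr0.
  by apply: eq_bigr => u ->.
by move=> u /negPf ->; rewrite scale0r.
Qed.

Lemma nonzero (p : IJ d -> 'I_m -> 'cV[R]_n) (lam : V -> 'cV[R]_N) :
  charmap (KJ K d) N lam -> realized_by p lam -> forall al k, p al k != 0.
Proof.
move=> cm rb al k; apply/eqP => pk.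
have [tau tK /andP[kt /eqP ct]] := pureK k.
have [_ ind] := cm _ (Fset_KJ al scK tK) (card_Fset _ ct).
have [P [_ [kP eP]]] := rb al.
have [g eg] : exists g : V -> R, lam (idJ al k) = \sum_(u in sigmaJ al) g u *: lam u.
  by apply/kP; rewrite -eP.
pose c u := (u == idJ al k)%:R - (if u \in sigmaJ al then g u else 0).
have : c (idJ al k) = 0.
  have hk : idJ al k \in Fset al tau by apply: idJ_Fset.
  apply: (ind c _ _ hk).
  transitivity (\sum_u c u *: lam u).
    rewrite [RHS](bigID (fun u => u \in Fset al tau)) /= [X in _ = _ + X]big1 ?addr0 //.
    move=> u nu; rewrite /c; case: eqP => [eu|_].
      by move: nu; rewrite eu idJ_Fset.
    case: ifP => [us|_]; last by rewrite subrr scale0r.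
    by move: nu; rewrite (subsetP (sigma_Fset al tau) u us).
  under eq_bigr => u _ do rewrite /c scalerBl.
  rewrite sumrB sum_pred1 eg [X in _ - X](bigID (fun u => u \in sigmaJ al)) /=.
  rewrite [X in _ - (_ + X)]big1 ?addr0 ?subrr //; last by move=> u /negPf ->; rewrite scale0r.
  rewrite [X in X - _]big_mkcond [X in _ - X]big_mkcond /= -sumrB big1 // => u _.
  by case: ifP => _; rewrite ?subrr.
rewrite /c eqxx (negPf (idJ_notin al k)) subr0 => /eqP; by rewrite oner_eq0.
Qed.


Definition Phi (p : IJ d -> 'I_m -> 'cV[R]_n) (c : V -> R) : Prop :=
  \sum_w c (idJ (oneJ d) w) *: p (oneJ d) w = 0 /\
  forall k b, (0 < b <= d k)%N -> \sum_w c (idJ (hJ d k b) w) *: p (hJ d k b) w = 0.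

Lemma sig1_sigh k (j : 'I_(d k).+1) v : v \in sigmaJ (oneJ d) ->
  v != Tagged (fun i => 'I_(d i).+1) j -> v \in sigmaJ (hJ d k j).
Proof.
case: v => i j'; rewrite !inE /= /hJ /oneJ.
case: (eqVneq i k) => [eik|nik]; last by move=> h _; exact: h.
subst i; move=> _; rewrite eq_Tagged /= => h; rewrite eq_Tagged /= inord_val; exact: h.
Qed.

Lemma idJ_hJ k (j : 'I_(d k).+1) : idJ (hJ d k j) k = Tagged (fun i => 'I_(d i).+1) j.
Proof. by rewrite /idJ /hJ eqxx inord_val. Qed.

Lemma relchar (p : IJ d -> 'I_m -> 'cV[R]_n) (lam : V -> 'cV[R]_N) :
  charmap (KJ K d) N lam -> realized_by p lam ->
  forall c : V -> R, \sum_u c u *: lam u = 0 <-> Phi p c.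
Proof.
move=> cm rb c; have nz := nonzero cm rb; split.
  move=> z0; split.
    by have [P [_ [kP eP]]] := rb (oneJ d); rewrite -(proj_sum kP eP) z0 mulmx0.
  by move=> k b _; have [P [_ [kP eP]]] := rb (hJ d k b); rewrite -(proj_sum kP eP) z0 mulmx0.
move=> [h1 h2]; have [P [_ [kP eP]]] := rb (oneJ d).
have : P *m (\sum_u c u *: lam u) = 0 by rewrite (proj_sum kP eP).
move/kP => [be ebe]; rewrite ebe; apply: big1 => u us.
suff -> : be u = 0 by rewrite scale0r.
move: us ebe; case: u => k j us ebe.
have hb : (0 < j <= d k)%N.
  by move: us; rewrite inE eq_Tagged /= -(inj_eq val_inj) /= lt0n -ltnS ltn_ord andbT.
have [Ph [_ [kPh ePh]]] := rb (hJ d k j).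
have e1 := proj_sum kPh ePh c; rewrite h2 // ebe mulmx_sumr (bigD1 _ us) /= big1 ?addr0 in e1.
  have e2 := ePh k; rewrite idJ_hJ in e2; move: e1.
  rewrite -scalemxAr -e2 => e1; apply: dom e1 _; exact: nz.
move=> v /andP[vs nv]; rewrite -scalemxAr.
have -> : Ph *m lam v = 0 by apply/kPh; apply: in_span; apply: sig1_sigh.
by rewrite scaler0.
Qed.


Lemma DJ_sum0 (W : finType) N' (lam mu : W -> 'cV[R]_N') (c : W -> R) :
  DJ_equiv lam mu -> (\sum_w c w *: lam w = 0 <-> \sum_w c w *: mu w = 0).
Proof.
move=> [g gu eg].
have e : \sum_w c w *: mu w = g *m \sum_w c w *: lam w.
  by rewrite mulmx_sumr; apply: eq_bigr => w _; rewrite eg scalemxAr.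
rewrite e; split => [->|h]; first by rewrite mulmx0.
by rewrite -(mulKmx gu (\sum_w c w *: lam w)) h mulmx0.
Qed.

Lemma Phi_DJ (p q : IJ d -> 'I_m -> 'cV[R]_n) :
  DJ_equiv (p (oneJ d)) (q (oneJ d)) ->
  (forall k b, (0 < b <= d k)%N -> DJ_equiv (p (hJ d k b)) (q (hJ d k b))) ->
  forall c, Phi p c <-> Phi q c.
Proof.
move=> e1 eh c; rewrite /Phi (DJ_sum0 _ e1); split=> -[h1 h2]; split => // k b hb.
  by apply/(DJ_sum0 _ (eh k b hb)); apply: h2.
by apply/(DJ_sum0 _ (eh k b hb)); apply: h2.
Qed.

Lemma same_kernel (lp lq : V -> 'cV[R]_N) (G : 'M[R]_N) (s : {set V}) x :
  G \in unitmx -> (forall u, lq u = G *m lp u) ->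
  (exists c : V -> R, x = \sum_(u in s) c u *: lp u) <->
  (exists c : V -> R, G *m x = \sum_(u in s) c u *: lq u).
Proof.
move=> Gu eG; split => -[c ec]; exists c.
  by rewrite ec mulmx_sumr; apply: eq_bigr => u _; rewrite eG scalemxAr.
rewrite -(mulKmx Gu x) ec mulmx_sumr; apply: eq_bigr => u _.
by rewrite eG -scalemxAr mulKmx.
Qed.

Lemma uniq_part (p q : IJ d -> 'I_m -> 'cV[R]_n) (lp lq : V -> 'cV[R]_N) :
  charmap (KJ K d) N lp -> realized_by p lp ->
  charmap (KJ K d) N lq -> realized_by q lq ->
  DJ_equiv (p (oneJ d)) (q (oneJ d)) ->
  (forall k b, (0 < b <= d k)%N -> DJ_equiv (p (hJ d k b)) (q (hJ d k b))) ->
  forall al, DJ_equiv (p al) (q al).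
Proof.
move=> cp rp cq rq e1 eh al.
have [G Gu eG] := rel_unit (span_lam cp) (span_lam cq)
  (fun c => iff_trans (relchar cp rp c) (iff_trans (Phi_DJ e1 eh c) (iff_sym (relchar cq rq c)))).
have [P [sP [kP eP]]] := rp al.
have [Q [sQ [kQ eQ]]] := rq al.
have [g gu eg] := @proj_equiv R n N P (Q *m G) sP
  (fun y => ltac:(have [x ex] := sQ y; exists (invmx G *m x); by rewrite -mulmxA mulKVmx))
  (fun x => ltac:(rewrite -mulmxA; split => h;
     [apply/kQ; apply/(same_kernel (sigmaJ al) x Gu eG); apply/kP; exact: h
     | apply/kP; apply/(same_kernel (sigmaJ al) x Gu eG); apply/kQ; exact: h])).
exists g => // w; rewrite eQ eP eG mulmxA eg mulmxA //.
Qed.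

End Main.


Section Lam.
Variables (R : comUnitRingType) (m n : nat) (d : 'I_m -> nat).
Variables (a : 'I_m -> 'cV[R]_n) (e : 'I_m -> nat -> 'I_m -> R).

Local Notation V := (KJV d).
Local Notation Tg := (Tagged (fun i : 'I_m => 'I_(d i).+1)).

Definition ridx (r : lowrow d) : 'I_(\sum_(i < m) d i) := cast_ord (card_lowrow d) (enum_rank r).
Definition rinv (i : 'I_(\sum_(i < m) d i)) : lowrow d := enum_val (cast_ord (esym (card_lowrow d)) i).

Lemma ridxK : cancel ridx rinv.
Proof. by move=> r; rewrite /ridx /rinv cast_ordK enum_rankK. Qed.
Lemma rinvK : cancel rinv ridx.
Proof. by move=> i; rewrite /ridx /rinv enum_valK cast_ordKV. Qed.

Lemma Lam_entry (x : V) (r : lowrow d) : dsubmx (Lambda a e x) (ridx r) 0 = Lambda_entry e x r.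
Proof. by rewrite /Lambda col_mxKd castmxE /= mxE /ridx cast_ordK enum_rankK. Qed.

Lemma Lam_top (x : V) : usubmx (Lambda a e x) = if val (tagged x) == 0%N then a (tag x) else 0.
Proof. by rewrite /Lambda col_mxKu. Qed.

Lemma sum_col_mx (W : finType) n1 n2 (f : W -> 'cV[R]_n1) (g : W -> 'cV[R]_n2) :
  \sum_w col_mx (f w) (g w) = col_mx (\sum_w f w) (\sum_w g w).
Proof.
by elim/big_rec3: _ => [|w A B C _ ->]; rewrite ?col_mx0 ?add_col_mx.
Qed.

Lemma Lam_rel (c : V -> R) :
  \sum_x c x *: Lambda a e x = 0 <->
  (\sum_i c (Tg (ord0 : 'I_(d i).+1)) *: a i = 0 /\
   forall r, \sum_x c x * Lambda_entry e x r = 0).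
Proof.
set S := \sum_x c x *: Lambda a e x.
have eu : usubmx S = \sum_i c (Tg (ord0 : 'I_(d i).+1)) *: a i.
  rewrite /S linear_sum /= sumKJV; apply: eq_bigr => i _.
  rewrite big_ord_recl /= linearZ /= Lam_top /= big1 ?addr0 //.
  by move=> j _; rewrite linearZ /= Lam_top /= scaler0.
have ed r : dsubmx S (ridx r) 0 = \sum_x c x * Lambda_entry e x r.
  rewrite /S linear_sum /= summxE; apply: eq_bigr => x _.
  by rewrite linearZ /= mxE Lam_entry.
split.
  move=> S0; split; first by rewrite -eu S0 linear0.
  by move=> r; rewrite -ed S0 linear0 mxE.
move=> [h1 h2]; rewrite -(vsubmxK S) eu h1.
have -> : dsubmx S = 0.
  apply/matrixP => i j; rewrite (ord1 j) -(rinvK i) ed h2 mxE //.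
by rewrite col_mx0.
Qed.

Lemma entry_sum (c : V -> R) k (t : 'I_(d k)) :
  \sum_x c x * Lambda_entry e x (Tagged (fun k => 'I_(d k)) t) =
  c (Tg (lift ord0 t)) - c (Tg (ord0 : 'I_(d k).+1))
  + \sum_(i | i != k) c (Tg (ord0 : 'I_(d i).+1)) * e k t.+1 i.
Proof.
rewrite sumKJV (bigD1 k) //=; congr (_ + _).
  rewrite big_ord_recl /Lambda_entry /= eqxx /= mulrN1 addrC; congr (_ - _).
  rewrite (bigD1 t) //= eqxx mulr1 big1 ?addr0 // => j jt.
  by rewrite /bump /= add1n eqSS -(inj_eq val_inj) /= in jt *; rewrite (negPf jt) mulr0.
apply: eq_bigr => i ik; rewrite big_ord_recl /Lambda_entry /= eq_sym (negPf ik) /=.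
by rewrite big1 ?addr0 // => j _; rewrite mulr0.
Qed.


Lemma Lam_low i (j : 'I_(d i)) :
  Lambda a e (Tg (lift ord0 j)) = col_mx 0 (delta_mx (ridx (Tagged (fun k => 'I_(d k)) j)) 0).
Proof.
rewrite -[LHS]vsubmxK Lam_top /=; congr col_mx.
apply/matrixP => i' z; rewrite (ord1 z) -(rinvK i') Lam_entry mxE eqxx andbT.
rewrite (inj_eq (can_inj ridxK)); case: (rinv i') => k t.
rewrite /Lambda_entry /=; case: (eqVneq k i) => [eki|nki].
  subst k; rewrite eq_Tagged /= /bump /= add1n eqSS -(inj_eq val_inj) /=.
  case: eqP => [ejt|njt]; case: eqP => [etj|ntj] //=.
  - by exfalso; apply: ntj; rewrite ejt.
  - by exfalso; apply: njt; rewrite etj.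

have -> : (existT (fun k => 'I_(d k)) k t == Tagged (fun k => 'I_(d k)) j) = false.
  by apply/negbTE; apply: contra nki => /eqP/(congr1 tag) /= ->.
by [].
Qed.

Lemma Lam_col0 i : Lambda a e (Tg (ord0 : 'I_(d i).+1)) = col_mx (a i) (dsubmx (Lambda a e (Tg (ord0 : 'I_(d i).+1)))).
Proof. by rewrite -[LHS]vsubmxK Lam_top. Qed.

Lemma Lam_span : (forall y : 'cV[R]_n, exists c : 'I_m -> R, y = \sum_w c w *: a w) ->
  forall x : 'cV[R]_(NJ n d), exists c : V -> R, x = \sum_u c u *: Lambda a e u.
Proof.
move=> sa x; have [c ec] := sa (usubmx x).
pose xi := dsubmx x - \sum_w c w *: dsubmx (Lambda a e (Tg (ord0 : 'I_(d w).+1))).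
exists (fun u => match unlift ord0 (tagged u) with None => c (tag u)
                 | Some j => xi (ridx (Tagged (fun k => 'I_(d k)) j)) 0 end).
rewrite sumKJV.
under eq_bigr => i _ do rewrite big_ord_recl /= unlift_none.
rewrite big_split /=.
under [X in _ = _ + X]eq_bigr => i _ do under eq_bigr => j _ do rewrite liftK Lam_low.
rewrite [X in _ = _ + X](sig_big_dep (fun _ => true) (fun _ _ => true)
  (fun i (j : 'I_(d i)) => xi (ridx (Tagged (fun k => 'I_(d k)) j)) 0 *:
      col_mx 0 (delta_mx (ridx (Tagged (fun k => 'I_(d k)) j)) 0))) /=.
have -> : \sum_(p : lowrow d) xi (ridx (Tagged (fun k => 'I_(d k)) (tagged p))) 0 *:
      col_mx 0 (delta_mx (ridx (Tagged (fun k => 'I_(d k)) (tagged p))) 0)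
    = \sum_(r : lowrow d) xi (ridx r) 0 *: col_mx (0 : 'cV[R]_n) (delta_mx (ridx r) 0).
  by apply: eq_bigr => -[i j].
rewrite (reindex rinv) /=; last by exists ridx => y _; rewrite ?ridxK ?rinvK.
under [X in _ = _ + X]eq_bigr => i' _ do rewrite rinvK scale_col_mx scaler0.
under eq_bigr => i _ do rewrite Lam_col0 scale_col_mx.
rewrite !sum_col_mx add_col_mx big1_eq addr0 -col_delta_sum -ec /xi addrC subrK.
by rewrite vsubmxK.
Qed.

End Lam.



Section Wedge.
Variables (R : comUnitRingType) (m n : nat) (d : 'I_m -> nat) (a : 'I_m -> 'cV[R]_n).
Local Notation Tg := (Tagged (fun i : 'I_m => 'I_(d i).+1)).

Lemma dwed1 (k : 'I_m) : (1 < (dwed k k).+1)%N.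
Proof. by rewrite /dwed eqxx. Qed.

Lemma std_idJ k (ev : 'I_m -> R) w :
  std_form a ev (idJ (hJ (dwed k) k 1) w) =
  col_mx (if w == k then 0 else a w) (if w == k then 1 else ev w)%:M.
Proof.
rewrite /std_form /idJ /hJ /=; case: (eqVneq w k) => [->|nwk] /=.
  by rewrite ?eqxx inordK ?dwed1.
by rewrite ?(negPf nwk).
Qed.


Lemma wedge_eq k (t : 'I_(d k)) (mu : 'I_m -> 'cV[R]_n) (ev : 'I_m -> R) (c : KJV d -> R) :
  is_proj (sigmaJ (hJ (dwed k) k 1)) (std_form a ev) (idJ (hJ (dwed k) k 1)) mu ->
  mu k != 0 ->
  (forall (a : R) (x : 'cV[R]_n), a *: x = 0 -> x != 0 -> a = 0) ->
  \sum_i c (Tg (ord0 : 'I_(d i).+1)) *: a i = 0 ->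
  (\sum_w c (idJ (hJ d k t.+1) w) *: mu w = 0 <->
   c (Tg (lift ord0 t)) - c (Tg (ord0 : 'I_(d k).+1))
   + \sum_(i | i != k) c (Tg (ord0 : 'I_(d i).+1)) * ev i = 0).
Proof.
move=> [Q [_ [kQ eQ]]] nz dom T.
set l := (X in _ <-> X = 0).
have X0 : Q *m std_form a ev (Tagged (fun i : 'I_m => 'I_(dwed k i).+1) (ord0 : 'I_(dwed k k).+1)) = 0.
  apply/kQ; apply: in_span; rewrite inE eq_Tagged /= /hJ eqxx -(inj_eq val_inj) /= inordK ?dwed1 //.
have std0 : std_form a ev (Tagged (fun i : 'I_m => 'I_(dwed k i).+1) (ord0 : 'I_(dwed k k).+1))
    = col_mx (a k) (-1)%:M by rewrite /std_form /= eqxx.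
have muk : mu k = Q *m col_mx 0 1%:M by rewrite eQ std_idJ eqxx.
have lt : lift ord0 t = inord t.+1 by apply/val_inj; rewrite /= inordK // ltnS.
have hk w : w != k -> idJ (hJ d k t.+1) w = Tg (ord0 : 'I_(d w).+1).
  by move=> wk; rewrite /idJ /hJ (negPf wk).
have eS : \sum_w c (idJ (hJ d k t.+1) w) *: mu w = Q *m (l *: col_mx 0 1%:M
   - c (Tg (ord0 : 'I_(d k).+1)) *: col_mx (a k) (-1)%:M).
  transitivity (Q *m \sum_w c (idJ (hJ d k t.+1) w) *: std_form a ev (idJ (hJ (dwed k) k 1) w)).
    by rewrite mulmx_sumr; apply: eq_bigr => w _; rewrite eQ scalemxAr.
  congr (_ *m _).
  under eq_bigr => w _ do rewrite std_idJ scale_col_mx.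
  rewrite sum_col_mx !scale_col_mx opp_col_mx add_col_mx; congr col_mx.
    rewrite (bigD1 k) //= eqxx !scaler0 !add0r.
    move: T; rewrite (bigD1 k) //= => /eqP; rewrite addrC addr_eq0 => /eqP <-.
    by apply: eq_bigr => w wk; rewrite (negPf wk) hk.
  rewrite (bigD1 k) //= eqxx !scale_scalar_mx.
  under eq_bigr => w wk do rewrite (negPf wk) (hk w wk) scale_scalar_mx.
  rewrite -raddf_sum -raddfD -raddfB /=; congr (_%:M).
  rewrite /idJ /hJ eqxx -lt /l; ring.
rewrite eS mulmxBr -!scalemxAr -std0 X0 scaler0 subr0 -muk.
by split => [h|->]; [exact: dom h nz | exact: scale0r].
Qed.

End Wedge.

Lemma basis_ext (R : comUnitRingType) (V : finType) N (lam mu : V -> 'cV[R]_N) s :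
  (forall u, lam u = mu u) -> is_basis lam s -> is_basis mu s.
Proof.
move=> e [sp ind]; split.
  by move=> x; have [c ->] := sp x; exists c; apply: eq_bigr => u _; rewrite e.
by move=> c h; apply: ind; rewrite -[RHS]h; apply: eq_bigr => u _; rewrite e.
Qed.

Lemma proj_ext (R : comUnitRingType) (V W : finType) N N' (s : {set V}) (lam lam' : V -> 'cV[R]_N)
  (f : W -> V) (mu : W -> 'cV[R]_N') :
  (forall u, lam u = lam' u) -> is_proj s lam f mu -> is_proj s lam' f mu.
Proof.
move=> e [P [sP [kP eP]]]; exists P; split => //; split.
  move=> x; rewrite kP; split => -[c ec]; exists c; rewrite ec; apply: eq_bigr => u _; by rewrite e.
by move=> w; rewrite eP e.
Qed.

Lemma dom_of (R : comUnitRingType) n : (forall a b : R, a * b = 0 -> (a == 0) || (b == 0)) ->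
  forall (a : R) (x : 'cV[R]_n), a *: x = 0 -> x != 0 -> a = 0.
Proof.
move=> H a x ax nx.
have [i xi] : exists i, x i 0 != 0.
  case: (pickP (fun i => x i 0 != 0)) => [i xi|h]; first by exists i.
  exfalso; move/negP: nx; apply; apply/eqP/matrixP => i j; rewrite (ord1 j) mxE.
  by apply/eqP; move: (h i) => /= /negbFE.
have : a * x i 0 = 0 by move/matrixP: ax => /(_ i 0); rewrite !mxE.
by move/H => /orP[/eqP //|]; rewrite (negPf xi).
Qed.

Lemma dom_coef (c : coeff) n :
  forall (a : coefR c) (x : 'cV[coefR c]_n), a *: x = 0 -> x != 0 -> a = 0.
Proof.
apply: dom_of; case: c => /= a b.
  by move/eqP; rewrite mulf_eq0.
by case: a b => [[|[|//]] ?] [[|[|//]] ?].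
Qed.

Unset Implicit Arguments.
Theorem mainTheorem6 (c : coeff) (m n : nat) (K : {set {set 'I_m}})
  (HK : star_shaped_sphere n K) (d : 'I_m -> nat) :
  (forall (p : IJ d -> 'I_m -> 'cV[coefR c]_n) (e : 'I_m -> nat -> 'I_m -> coefR c),
     realizable K p ->
     (forall (v : 'I_m) (b : nat), (0 < b <= d v)%N ->
        charmap (KJ K (dwed v)) (n + 1) (std_form (p (oneJ d)) (e v b))
        /\ is_proj (sigmaJ (oneJ (dwed v))) (std_form (p (oneJ d)) (e v b))
                   (idJ (oneJ (dwed v))) (p (oneJ d))
        /\ is_proj (sigmaJ (hJ (dwed v) v 1)) (std_form (p (oneJ d)) (e v b))
                   (idJ (hJ (dwed v) v 1)) (p (hJ d v b))) ->
     charmap (KJ K d) (NJ n d) (Lambda (p (oneJ d)) e)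
     /\ realized_by p (Lambda (p (oneJ d)) e))
  /\
  (forall p q : IJ d -> 'I_m -> 'cV[coefR c]_n,
     realizable K p -> realizable K q ->
     DJ_equiv (p (oneJ d)) (q (oneJ d)) ->
     (forall (v : 'I_m) (b : nat), (0 < b <= d v)%N ->
        DJ_equiv (p (hJ d v b)) (q (hJ d v b))) ->
     forall al : IJ d, DJ_equiv (p al) (q al)).
Proof.
have pure := purity HK.
have [sc [f0 _]] := HK.
have dom := @dom_coef c n.
split; last first.
  move=> p q [lp [cp rp]] [lq [cq rq]] e1 eh al.
  exact: (uniq_part sc pure f0 dom cp rp cq rq e1 eh).
move=> p e [lam [cm rb]] Hw.
set a := p (oneJ d).
have nz := nonzero sc pure cm rb.
have sa : forall y : 'cV[coefR c]_n, exists c' : 'I_m -> coefR c, y = \sum_w c' w *: a w.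
  move=> y; have [P [sP [kP eP]]] := rb (oneJ d).
  have [x <-] := sP y; have [cc ->] := span_lam sc f0 cm x.
  by exists (fun w => cc (idJ (oneJ d) w)); rewrite (proj_sum kP eP).
have rel : forall cc : KJV d -> coefR c,
    \sum_u cc u *: lam u = 0 <-> \sum_u cc u *: Lambda a e u = 0.
  move=> cc; rewrite (relchar sc pure dom cm rb) Lam_rel /Phi.
  split => -[T H2]; split => //.
    case=> k t; rewrite entry_sum.
    have hb : (0 < t.+1 <= d k)%N by rewrite ltn_ord.
    apply/(wedge_eq t (proj2 (proj2 (Hw k t.+1 hb))) (nz _ k) dom T).
    exact: H2.
  move=> k b hb.
  have hb' : (b.-1 < d k)%N by move: hb; case: b.
  pose t := Ordinal hb'.
  have eb : b = t.+1 by rewrite /= prednK //; case/andP: hb.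
  rewrite eb; apply/(wedge_eq t (proj2 (proj2 (Hw k t.+1 _))) (nz _ k) dom T).
    by rewrite -eb.
  by have := H2 (Tagged (fun k => 'I_(d k)) t); rewrite entry_sum.
have [G Gu eG] := rel_unit (span_lam sc f0 cm) (Lam_span e sa) rel.
split.
  move=> s sK cs; apply: (basis_ext (fun u => esym (eG u))).
  exact: basis_transfer Gu (cm s sK cs).
move=> al; apply: (proj_ext (fun u => esym (eG u))).
exact: proj_transfer Gu (rb al).
Qed.
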